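(* Let $D$ be a digon-free digraph with $n$ vertices, and let $\tilde{\Delta}=\max\{\sqrt{d^+(v)d^-(v)} : v\in V(D)\}$. Then $$\alpha(D)\geq \frac{n}{\frac{2\tilde{\Delta}}{3}+1}.$$
   Context: All digraphs are finite, loopless and strict (at most one edge from $u$ to $v$ for distinct $u,v$). A digraph is digon-free if it has no directed cycle of length $2$. $d^+(v)$ and $d^-(v)$ denote the out-degree and in-degree of $v$. A subset $S\subseteq V(D)$ is acyclic if $D[S]$ contains no directed cycle; $\alpha(D)$ is the maximum size of an acyclic subset of $V(D)$. *)

(* Defs.v *)
From mathcomp Require Import all_boot all_order all_algebra.
From mathcomp Require Import boolp reals.
Set Implicit Arguments. Unset Strict Implicit. Unset Printing Implicit Defensive.
Import Order.TTheory GRing.Theory Num.Theory.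

(* A digraph on a finite vertex type T is an edge relation E : rel T
   (strictness is automatic). *)
Definition loopless (T : finType) (E : rel T) : Prop := forall v, ~~ E v v.
Definition digon_free (T : finType) (E : rel T) : Prop :=
  forall u v, ~~ (E u v && E v u).

Definition outdeg (T : finType) (E : rel T) (v : T) : nat := #|[set w | E v w]|.
Definition indeg (T : finType) (E : rel T) (v : T) : nat := #|[set u | E u v]|.

(* S is acyclic: D[S] contains no directed cycle, i.e. no nonempty closed
   walk x1 -> x2 -> ... -> xk -> x1 with all xi in S. *)
Definition acyclic_set (T : finType) (E : rel T) (S : {set T}) : Prop :=
  ~ exists s : seq T, [/\ s != [::], all (fun x => x \in S) s & cycle E s].

Definition alpha (T : finType) (E : rel T) : nat :=
  \max_(S : {set T} | `[< acyclic_set E S >]) #|S|.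

(* max over v of sqrt(d^+(v) d^-(v)), 0 on the empty digraph *)
Definition tDelta (R : realType) (T : finType) (E : rel T) : R :=
  (\big[Num.max/0]_(v : T) Num.sqrt ((outdeg E v * indeg E v)%:R))%R.

(* Main.v *)
Require Import Defs.
From mathcomp Require Import all_boot all_order all_algebra.
From mathcomp Require Import boolp reals.
From mathcomp Require Import ring lra.
Import Order.TTheory GRing.Theory Num.Theory.
Local Open Scope ring_scope.
Set Implicit Arguments. Unset Strict Implicit.

Definition hh (R : realType) (a b : nat) : R :=
  (a%:R + 1)^-1 + (b%:R + 1)^-1 - (a%:R + b%:R + 1)^-1.

Lemma hh_id (R : realType) (a b : nat) :
  a%:R * hh R a.-1 b + b%:R * hh R a b.-1 + (((a == 0%N) || (b == 0%N)) : nat)%:R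
  = (a + b + 1)%:R * hh R a b.
Proof.
rewrite /hh.
case: a => [|a]; case: b => [|b] /=.
- rewrite ?mul0r ?add0r ?addr0 ?invr1; lra.
- rewrite ?mul0r ?add0r ?invr1 ?natrD ?mulrSr ?add0r.
  have hb : 0 <= b%:R :> R by rewrite ler0n.
  field; repeat (apply/andP; split); apply: lt0r_neq0; lra.
- rewrite ?mul0r ?addr0 ?invr1 ?natrD ?mulrSr ?add0r ?addr0.
  have ha : 0 <= a%:R :> R by rewrite ler0n.
  field; repeat (apply/andP; split); apply: lt0r_neq0; lra.
- rewrite ?natrD ?mulrSr ?addr0.
  have ha : 0 <= a%:R :> R by rewrite ler0n.
  have hb : 0 <= b%:R :> R by rewrite ler0n.
  field; repeat (apply/andP; split); apply: lt0r_neq0; lra.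
Qed.

Lemma hh_ge (R : realType) (a b : nat) :
  1 <= hh R a b * (2 * Num.sqrt ((a * b)%:R) / 3 + 1).
Proof.
rewrite /hh natrM.
have ha : 0 <= a%:R :> R by rewrite ler0n.
have hb : 0 <= b%:R :> R by rewrite ler0n.
move: ha hb.
set x := a%:R. set y := b%:R. move=> ha hb.
set s := Num.sqrt _.
have s0 : 0 <= s by rewrite sqrtr_ge0.
have s2 : s ^+ 2 = x * y by rewrite sqr_sqrtr // mulr_ge0.
have sle : 2 * s <= x + y.
  have : (2 * s) ^+ 2 <= (x + y) ^+ 2.
    rewrite exprMn s2. have := sqr_ge0 (x - y). nra.
  by rewrite ler_sqr // ?nnegrE; lra.
have hx1 : 0 < x + 1 by lra.
have hy1 : 0 < y + 1 by lra.
have hxy1 : 0 < x + y + 1 by lra.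
have -> : (x + 1)^-1 + (y + 1)^-1 - (x + y + 1)^-1
   = ((x + y + 1) ^+ 2 - x * y) / ((x + 1) * (y + 1) * (x + y + 1)).
  field; repeat (apply/andP; split); apply: lt0r_neq0; lra.
have hD : 0 < (x + 1) * (y + 1) * (x + y + 1) by rewrite !mulr_gt0.
rewrite mulrAC ler_pdivlMr // mul1r.
have key : 0 <= 2 * ((x + y + 1) ^+ 2 - s ^+ 2) - 3 * s * (x + y + 2).
  have h1 : 0 <= ((x + y) / 2 - s) * (2 * ((x + y) / 2 + s) + 3 * (x + y) + 6) by
    apply: mulr_ge0; lra.
  nra.
rewrite -s2.
have h2 := mulr_ge0 s0 key.
nra.
Qed.

Definition doutU (T : finType) (E : rel T) (U : {set T}) (v : T) : nat :=
  #|[set w in U | E v w]|.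
Definition dinU (T : finType) (E : rel T) (U : {set T}) (v : T) : nat :=
  #|[set w in U | E w v]|.

Lemma doutD1 (T : finType) (E : rel T) (U : {set T}) (v z : T) :
  z \in U -> doutU E (U :\ z) v = (doutU E U v - E v z)%N.
Proof.
move=> zU; rewrite /doutU (cardsD1 z [set w in U | E v w]) inE zU /=.
rewrite addKn; apply: eq_card => w; rewrite !inE; by case: (w == z); case: (w \in U).
Qed.

Lemma dinD1 (T : finType) (E : rel T) (U : {set T}) (v z : T) :
  z \in U -> dinU E (U :\ z) v = (dinU E U v - E z v)%N.
Proof.
move=> zU; rewrite /dinU (cardsD1 z [set w in U | E w v]) inE zU /=.
rewrite addKn; apply: eq_card => w; rewrite !inE; by case: (w == z); case: (w \in U).
Qed.

Lemma acyc_set0 (T : finType) (E : rel T) : acyclic_set E set0.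
Proof. by move=> [[|x s] [//= _ /andP [] ]]; rewrite inE. Qed.

Lemma acyc_sub (T : finType) (E : rel T) (S S' : {set T}) :
  S \subset S' -> acyclic_set E S' -> acyclic_set E S.
Proof.
move=> sub hS [s [ne /allP al cy]]; apply: hS; exists s; split => //.
by apply/allP => x /al; apply: (subsetP sub).
Qed.

Lemma acyc_add (T : finType) (E : rel T) (U S : {set T}) (z : T) :
  z \in U -> S \subset U -> acyclic_set E S ->
  ((doutU E U z == 0%N) || (dinU E U z == 0%N)) ->
  acyclic_set E (z |: S).
Proof.
move=> zU subU hS hz [s [ne /allP al cy]].
case: (boolP (z \in s)) => zs; last first.
  apply: hS; exists s; split => //; apply/allP => x xs.
  move: (al x xs); rewrite !inE; case: eqP => // ex.
  by rewrite -ex xs in zs.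
have hU : forall x, x \in s -> x \in U.
  move=> x xs; move: (al x xs); rewrite !inE; case/orP => [/eqP -> //|].
  by move/(subsetP subU).
case/orP: hz => /eqP/cards0_eq/setP H.
  have := H (next s z); rewrite !inE hU ?mem_next // next_cycle //.
have := H (prev s z); rewrite !inE hU ?mem_prev // prev_cycle //.
Qed.

Definition FF (R : realType) (T : finType) (E : rel T) (U : {set T}) : R :=
  \sum_(v in U) hh R (doutU E U v) (dinU E U v).
Definition II (T : finType) (E : rel T) (U : {set T}) (z : T) : bool :=
  (doutU E U z == 0%N) || (dinU E U z == 0%N).

Lemma hh_step (R : realType) (a b : nat) (e1 e2 : bool) : ~~ (e1 && e2) ->
  hh R (a - e1) (b - e2) = hh R a b + e1%:R * (hh R a.-1 b - hh R a b)
     + e2%:R * (hh R a b.-1 - hh R a b).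
Proof.
by case: e1; case: e2 => //= _; rewrite ?subn1 ?subn0 ?mul1r ?mul0r ?addr0; ring.
Qed.

Lemma sum_ind (T : finType) (R : realType) (A : {set T}) (P : pred T) :
  \sum_(z in A) ((P z : nat)%:R : R) = #|[set z in A | P z]|%:R.
Proof.
rewrite -natr_sum; congr (_%:R).
rewrite -big_mkcondr /= -sum1_card /=; apply: eq_bigl => z; by rewrite !inE.
Qed.

Lemma per_v (R : realType) (T : finType) (E : rel T)
  (hloop : loopless E) (hdigon : digon_free E) (U : {set T}) (v : T) :
  v \in U ->
  \sum_(z in U :\ v) hh R (doutU E (U :\ z) v) (dinU E (U :\ z) v)
    + ((II E U v : nat)%:R : R) = #|U|%:R * hh R (doutU E U v) (dinU E U v).
Proof.
move=> vU.
set a := doutU E U v; set b := dinU E U v.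
rewrite (eq_bigr (fun z => hh R a b + (E v z)%:R * (hh R a.-1 b - hh R a b)
     + (E z v)%:R * (hh R a b.-1 - hh R a b))); first last.
  move=> z; rewrite in_setD1 => /andP[_ zU]; rewrite doutD1 // dinD1 // hh_step //.
rewrite big_split /= big_split /= -!big_distrl /= (sum_ind R (U :\ v) (E v)) (sum_ind R (U :\ v) (fun z => E z v)) sumr_const.
have -> : #|[set z in U :\ v | E v z]| = a.
  apply: eq_card => z; rewrite !inE.
  case: (eqVneq z v) => [->|] //=.
  by rewrite (negbTE (hloop v)) andbF.
have -> : #|[set z in U :\ v | E z v]| = b.
  apply: eq_card => z; rewrite !inE.
  case: (eqVneq z v) => [->|] //=.
  by rewrite (negbTE (hloop v)) andbF.
rewrite (cardsD1 v U) vU /=.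
have hid := hh_id R a b.
move: hid; rewrite /II -/a -/b.
set I := ((((a == 0%N) || (b == 0%N)) : nat)%:R : R) => hid.
have hI : I = (a + b + 1)%:R * hh R a b - a%:R * hh R a.-1 b - b%:R * hh R a b.-1.
  rewrite -hid; ring.
rewrite hI -mulr_natl !natrD; ring.
Qed.

Lemma avg (R : realType) (T : finType) (E : rel T)
  (hloop : loopless E) (hdigon : digon_free E) (U : {set T}) :
  \sum_(z in U) (FF R E (U :\ z) + ((II E U z : nat)%:R : R)) = #|U|%:R * FF R E U.
Proof.
rewrite big_split /= /FF.
rewrite (exchange_big_dep (fun v => v \in U)) /=; last first.
  by move=> z v _; rewrite in_setD1 => /andP[].
rewrite -big_split /= mulr_sumr; apply: eq_bigr => v vU.
rewrite -(per_v R hloop hdigon vU); congr (_ + _).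
apply: eq_bigl => z; rewrite !in_setD1 eq_sym vU andbT; by rewrite andbC.
Qed.

Lemma key (R : realType) (T : finType) (E : rel T)
  (hloop : loopless E) (hdigon : digon_free E) (U : {set T}) :
  exists S : {set T}, [/\ S \subset U, acyclic_set E S & FF R E U <= #|S|%:R].
Proof.
move: {2}#|U| (erefl #|U|) => n; elim: n U => [|n IH] U hU.
  exists set0; split; [exact: sub0set | exact: acyc_set0 |].
  move/eqP: hU; rewrite cards_eq0 => /eqP ->; by rewrite /FF big_set0.
have [z zU hz] : exists2 z, z \in U & FF R E U <= FF R E (U :\ z) + ((II E U z : nat)%:R).
  case: (pselect (exists2 z, z \in U & FF R E U <= FF R E (U :\ z) + ((II E U z : nat)%:R))) => // hn.
  exfalso.
  have hne : has (fun z => z \in U) (index_enum T).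
    have : (0 < #|U|)%N by rewrite hU.
    rewrite card_gt0 => /set0Pn [x xU]; apply/hasP; exists x => //; by rewrite mem_index_enum.
  have lt : \sum_(z in U) (FF R E (U :\ z) + ((II E U z : nat)%:R : R)) < \sum_(z in U) FF R E U.
    apply: ltr_sum => // z zU; rewrite ltNge; apply/negP => hle; apply: hn; by exists z.
  by move: lt; rewrite avg // sumr_const mulr_natl ltxx.
have hUz : #|U :\ z| = n by move: hU; rewrite (cardsD1 z U) zU add1n => -[].
have [S' [sub acy le]] := IH _ hUz.
have subU : S' \subset U by apply: (subset_trans sub); apply: subD1set.
case hI : (II E U z).
  exists (z |: S'); split.
  - by rewrite subUset sub1set zU subU.
  - exact: (acyc_add zU subU acy hI).
  - have zS : z \notin S' by apply/negP => /(subsetP sub); rewrite !inE eqxx.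
    rewrite cardsU1 zS natrD; move: hz; rewrite hI /=; lra.
exists S'; split => //; move: hz; rewrite hI /= addr0 => hz; lra.
Qed.

Unset Implicit Arguments.

Theorem mainTheorem2 (R : realType) (T : finType) (E : rel T)
  (hloop : loopless E) (hdigon : digon_free E) :
  (#|T|%:R : R) / (2 * tDelta R E / 3 + 1) <= (alpha E)%:R.
Proof.
have [S [_ acy le]] := key R hloop hdigon [set: T].
have hal : (#|S| <= alpha E)%N.
  rewrite /alpha; apply: (@leq_bigmax_cond _ (fun S : {set T} => `[< acyclic_set E S >]) (fun S : {set T} => #|S|) S); exact/asboolP.
apply: (le_trans _ (_ : (#|S|%:R : R) <= (alpha E)%:R)); last by rewrite ler_nat.
apply: le_trans le.
set c := 2 * tDelta R E / 3 + 1.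
have hv : forall v, c^-1 <= hh R (doutU E [set: T] v) (dinU E [set: T] v).
  move=> v.
  have -> : doutU E [set: T] v = outdeg E v by apply: eq_card => w; rewrite !inE.
  have -> : dinU E [set: T] v = indeg E v by apply: eq_card => w; rewrite !inE.
  have h1 := hh_ge R (outdeg E v) (indeg E v).
  have hs : Num.sqrt ((outdeg E v * indeg E v)%:R) <= tDelta R E.
    rewrite /tDelta; exact: (le_bigmax 0 (fun v => Num.sqrt ((outdeg E v * indeg E v)%:R : R))).
  have s0 : 0 <= Num.sqrt ((outdeg E v * indeg E v)%:R : R) by rewrite sqrtr_ge0.
  set s := Num.sqrt _ in h1 hs s0.
  set h := hh R _ _ in h1 *.
  have c0 : 0 < c by rewrite /c; lra.
  have hpos : 0 <= h.
    rewrite leNgt; apply/negP => hn.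
    have : h * (2 * s / 3 + 1) < 0 by rewrite pmulr_llt0 //; lra.
    lra.
  rewrite -[c^-1]mul1r ler_pdivrMr //.
  apply: (le_trans h1); rewrite ler_wpM2l // /c; lra.
rewrite /FF.
apply: (le_trans _ (ler_sum _ (fun v _ => hv v))).
by rewrite sumr_const cardsT mulr_natl.
Qed.
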